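(* Let $\mu_Y\in\mathbb{R}$, $\sigma_Y>0$, $n\ge 2$, and let $X_1,\dots,X_n$ be i.i.d. random variables with $X_i\sim LN(\mu_Y,\sigma_Y^2)$. Let $A_n=\frac1n\sum_{i=1}^n X_i$, $H_n=n\big/\sum_{i=1}^n (1/X_i)$ and $K_n=\frac{A_n}{H_n}-1$. Then $$E(K_n)=\frac{n-1}{n}\,k=\frac{n-1}{n}\,C_v^2,$$ where $k=C_v^2=\exp(\sigma_Y^2)-1$.
   Context: $X\sim LN(\mu_Y,\sigma_Y^2)$ means $\ln X\sim N(\mu_Y,\sigma_Y^2)$, i.e. $X$ has density $f(x)=\frac{1}{x\sigma_Y\sqrt{2\pi}}\exp\!\big(-\frac{(\ln x-\mu_Y)^2}{2\sigma_Y^2}\big)$ for $x>0$. For such $X$, $\alpha=E[X]$ is the arithmetic mean, $\beta^2=E[(X-\alpha)^2]$ the variance, $C_v=\beta/\alpha$ the coefficient of variation, $h=1/E[1/X]$ the harmonic mean, and $k=\alpha/h-1$ the relative ratio; one has $k=C_v^2=\exp(\sigma_Y^2)-1$. $A_n$ is the sample arithmetic mean, $H_n$ the sample harmonic mean, and $K_n$ the sample relative ratio. *)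

(* Defs.v *)
From Stdlib Require Import Reals Lra List.
Open Scope R_scope.

Definition lnpdf (mu s x : R) : R :=
  / (x * s * sqrt (2 * PI)) * exp (- (ln x - mu) ^ 2 / (2 * s ^ 2)).

Definition improper_int0inf (f : R -> R) (l : R) : Prop :=
  forall eps : R, 0 < eps ->
    exists d M : R, 0 < d /\ d <= M /\
      forall a b : R, 0 < a < d -> M < b ->
        exists pr : Riemann_integrable f a b, Rabs (RiemannInt pr - l) < eps.

(* [ln_expect mu s n F l]: for X_1,...,X_n i.i.d. LN(mu, s^2), the expectation
   E[F (X_1 :: ... :: X_n :: nil)] exists and equals l.  It is the integral of
   F against the product density over (0,+oo)^n, computed as an iterated
   improper integral (first variable outermost). *)
Fixpoint ln_expect (mu s : R) (n : nat) (F : list R -> R) (l : R) : Prop :=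
  match n with
  | O => F nil = l
  | S m =>
      exists g : R -> R,
        (forall x : R, 0 < x -> ln_expect mu s m (fun xs => F (x :: xs)) (g x)) /\
        improper_int0inf (fun x => lnpdf mu s x * g x) l
  end.

Definition sample_A (n : nat) (xs : list R) : R :=
  fold_right Rplus 0 xs / INR n.
Definition sample_H (n : nat) (xs : list R) : R :=
  INR n / fold_right (fun x acc => / x + acc) 0 xs.
Definition sample_K (n : nat) (xs : list R) : R :=
  sample_A n xs / sample_H n xs - 1.

(* Main.v *)
Require Import Defs.
From Stdlib Require Import Reals Lra List Lia.
From Coquelicot Require Import Coquelicot.
From Stdlib Require Import Reals Lra.
Open Scope R_scope.

Definition gf (t : R) := exp (- t ^ 2).
Definition G (x : R) := RInt gf 0 x.
Definition If (u t : R) := exp (- (u ^ 2 * (1 + t ^ 2))) / (1 + t ^ 2).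
Definition I (x : R) := RInt (fun t => If x t) 0 1.

Lemma gf_cont x : continuous gf x.
Proof. apply (@ex_derive_continuous R_AbsRing R_NormedModule). unfold gf. auto_derive. auto. Qed.

Lemma gf_ex a b : ex_RInt gf a b.
Proof. apply (@ex_RInt_continuous R_CompleteNormedModule). intros; apply gf_cont. Qed.

Lemma G_deriv x : is_derive G x (gf x).
Proof.
  apply (@is_derive_RInt R_NormedModule) with (a := 0).
  apply filter_forall. intros; apply (@RInt_correct R_CompleteNormedModule), gf_ex.
  apply gf_cont.
Qed.

Lemma opt_pos t : 0 < 1 + t ^ 2.
Proof. nra. Qed.

Lemma If_ex x a b : ex_RInt (fun t => If x t) a b.
Proof. apply (@ex_RInt_continuous R_CompleteNormedModule). intros; apply (@ex_derive_continuous R_AbsRing R_NormedModule). unfold If.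
  auto_derive. pose proof (opt_pos z). lra. Qed.

Definition dIf (u t : R) := -2 * u * exp (- (u ^ 2 * (1 + t ^ 2))).

Lemma If_deriv u t : is_derive (fun z => If z t) u (dIf u t).
Proof.
  unfold If, dIf. auto_derive. pose proof (opt_pos t); lra.
  replace (u * (u * 1) * (1 + t * (t * 1))) with (u ^ 2 * (1 + t ^ 2)) by ring. replace (1 + t*(t*1)) with (1 + t^2) by ring. pose proof (opt_pos t). field. lra.
Qed.

Lemma dIf_cont x t : continuity_2d_pt (fun u v => Derive (fun z => If z v) u) x t.
Proof.
  apply continuity_2d_pt_ext with (f := dIf).
  intros; symmetry; apply is_derive_unique, If_deriv.
  unfold dIf.
  apply continuity_2d_pt_mult.
  apply continuity_2d_pt_mult. apply continuity_2d_pt_const. apply continuity_2d_pt_id1.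
  apply continuity_1d_2d_pt_comp with (f := exp). apply derivable_continuous_pt, derivable_pt_exp.
  apply continuity_2d_pt_opp.
  apply continuity_2d_pt_mult.
  apply continuity_2d_pt_ext with (f := fun u v => u * u). intros; simpl; ring.
  apply continuity_2d_pt_mult; apply continuity_2d_pt_id1.
  apply continuity_2d_pt_plus. apply continuity_2d_pt_const.
  apply continuity_2d_pt_ext with (f := fun u v => v * v). intros; simpl; ring.
  apply continuity_2d_pt_mult; apply continuity_2d_pt_id2.
Qed.

Lemma I_deriv x : is_derive I x (RInt (fun t => dIf x t) 0 1).
Proof.
  unfold I.
  replace (RInt (fun t => dIf x t) 0 1) with (RInt (fun t => Derive (fun u => If u t) x) 0 1).
  apply (is_derive_RInt_param (fun u t => If u t)).
  apply filter_forall. intros y t _. eexists; apply If_deriv.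
  intros; apply dIf_cont.
  apply filter_forall. intros; apply If_ex.
  apply RInt_ext. intros; apply is_derive_unique, If_deriv.
Qed.
Lemma RInt_scalR (f : R -> R) a b l : ex_RInt f a b -> RInt (fun x => l * f x) a b = l * RInt f a b.
Proof. apply (@RInt_scal R_CompleteNormedModule). Qed.
Lemma RInt_uniqR (f : R -> R) a b (l : R) : is_RInt f a b l -> RInt f a b = l.
Proof. apply (@is_RInt_unique R_CompleteNormedModule). Qed.
Lemma RInt_constR a b (c : R) : RInt (fun _ => c) a b = (b - a) * c.
Proof. apply (@RInt_const R_CompleteNormedModule). Qed.
Lemma RInt_pointR a (f : R -> R) : RInt f a a = 0.
Proof. apply (@RInt_point R_CompleteNormedModule). Qed.
Lemma contR (f : R -> R) x : ex_derive f x -> continuous f x.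
Proof. apply (@ex_derive_continuous R_AbsRing R_NormedModule). Qed.
Lemma ex_RInt_contR (f : R -> R) a b : (forall z, Rmin a b <= z <= Rmax a b -> continuous f z) -> ex_RInt f a b.
Proof. apply (@ex_RInt_continuous R_CompleteNormedModule). Qed.

Lemma RInt_extR (f g : R -> R) a b : (forall x, Rmin a b < x < Rmax a b -> f x = g x) -> RInt f a b = RInt g a b.
Proof. apply (@RInt_ext R_CompleteNormedModule). Qed.

Definition J (x : R) := RInt (fun t => exp (- (x ^ 2 * t ^ 2))) 0 1.

Lemma J_ex x : ex_RInt (fun t => exp (- (x ^ 2 * t ^ 2))) 0 1.
Proof. apply ex_RInt_contR. intros; apply contR. auto_derive. auto. Qed.

Lemma G_J x : G x = x * J x.
Proof.
  unfold G, J.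
  rewrite <- RInt_scalR by apply J_ex.
  transitivity (RInt gf (x * 0 + 0) (x * 1 + 0)). f_equal; ring.
  rewrite <- (@RInt_comp_lin R_CompleteNormedModule) by apply gf_ex.
  apply RInt_extR. intros t _. unfold gf. change (x * exp (- (x * t + 0) ^ 2) = x * exp (- (x ^ 2 * t ^ 2))). f_equal. f_equal. ring.
Qed.

Lemma dI_J x : RInt (fun t => dIf x t) 0 1 = -2 * x * exp (- x ^ 2) * J x.
Proof.
  unfold J. rewrite <- RInt_scalR by apply J_ex.
  apply RInt_extR. intros t _. unfold dIf.
  replace (- (x ^ 2 * (1 + t ^ 2))) with (- x ^ 2 + - (x ^ 2 * t ^ 2)) by ring.
  rewrite exp_plus. ring.
Qed.

Definition h x := G x * G x + I x.

Lemma h_deriv x : is_derive h x 0.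
Proof.
  unfold h.
  replace 0 with (plus (plus (mult (gf x) (G x)) (mult (G x) (gf x))) (RInt (fun t => dIf x t) 0 1)).
  apply (@is_derive_plus R_AbsRing R_NormedModule).
  apply (@is_derive_mult R_AbsRing). apply G_deriv. apply G_deriv.
  intros; unfold mult; simpl; apply Rmult_comm. apply I_deriv.
  rewrite dI_J, G_J. unfold gf, plus, mult; simpl. ring.
Qed.

Lemma h_const x : h x = h 0.
Proof.
  assert (H: is_RInt (fun _ => 0) 0 x (minus (h x) (h 0))).
  apply (@is_RInt_derive R_CompleteNormedModule). intros; apply h_deriv.
  intros; apply contR; auto_derive; auto.
  apply RInt_uniqR in H. rewrite RInt_constR in H. unfold minus, plus, opp in H; simpl in H. lra.
Qed.

Lemma h0 : h 0 = PI / 4.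
Proof.
  unfold h, G. rewrite RInt_pointR, Rmult_0_l, Rplus_0_l. unfold I.
  rewrite <- atan_1.
  transitivity (RInt (fun t => / (1 + t ^ 2)) 0 1).
  apply RInt_extR. intros t _. unfold If. replace (- (0 ^ 2 * (1 + t ^ 2))) with 0 by ring.
  rewrite exp_0. field. pose proof (opt_pos t); lra.
  apply RInt_uniqR.
  replace (atan 1) with (minus (atan 1) (atan 0)) by (rewrite atan_0; unfold minus, plus, opp; simpl; ring).
  apply (@is_RInt_derive R_CompleteNormedModule).
  intros; apply is_derive_Reals, derivable_pt_lim_atan.
  intros; apply contR; auto_derive. pose proof (opt_pos x); lra.
Qed.

Lemma I_bounds x : 0 <= I x <= exp (- x ^ 2).
Proof.
  unfold I. split.
  - apply Rle_trans with (RInt (fun _ => 0) 0 1). right; rewrite RInt_constR; ring.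
    apply RInt_le. lra. apply ex_RInt_contR; intros; apply contR; auto_derive; auto.
    apply If_ex. intros t _. unfold If. pose proof (opt_pos t). pose proof (exp_pos (- (x ^ 2 * (1 + t ^ 2)))).
    apply Rlt_le, Rdiv_lt_0_compat; lra.
  - apply Rle_trans with (RInt (fun _ => exp (- x ^ 2)) 0 1). 2: right; rewrite RInt_constR; ring.
    apply RInt_le. lra. apply If_ex. apply ex_RInt_contR; intros; apply contR; auto_derive; auto.
    intros t _. unfold If. pose proof (opt_pos t).
    assert (exp (- (x ^ 2 * (1 + t ^ 2))) <= exp (- x ^ 2)).
    { destruct (Req_dec (x^2*t^2) 0) as [E|E].
      right; f_equal; nra. left; apply exp_increasing. nra. }
    pose proof (exp_pos (- (x ^ 2 * (1 + t ^ 2)))).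
    apply Rmult_le_reg_r with (1 + t^2). lra. unfold Rdiv. rewrite Rmult_assoc, Rinv_l by lra. nra.
Qed.

Lemma J_ge0 x : 0 <= J x.
Proof.
  unfold J. apply Rle_trans with (RInt (fun _ => 0) 0 1). right; rewrite RInt_constR; ring.
  apply RInt_le. lra. apply ex_RInt_contR; intros; apply contR; auto_derive; auto.
  apply J_ex. intros; apply Rlt_le, exp_pos.
Qed.

Lemma G_sq x : G x * G x = PI / 4 - I x.
Proof. pose proof (h_const x). rewrite h0 in H. unfold h in H. lra. Qed.

Definition gc := sqrt PI / 2.

Lemma gc_pos : 0 < gc.
Proof. unfold gc. pose proof PI_RGT_0. pose proof (sqrt_lt_R0 PI H). lra. Qed.

Lemma gc_sq : gc * gc = PI / 4.
Proof. unfold gc. pose proof PI_RGT_0. replace (sqrt PI / 2 * (sqrt PI / 2)) with (sqrt PI * sqrt PI / 4) by field.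
  rewrite sqrt_sqrt; lra. Qed.

Lemma G_close x : 0 <= x -> Rabs (G x - gc) <= I x / gc.
Proof.
  intros Hx. pose proof gc_pos. pose proof (G_sq x). pose proof gc_sq. pose proof (I_bounds x).
  assert (0 <= G x) by (rewrite G_J; pose proof (J_ge0 x); nra).
  apply Rmult_le_reg_r with gc. auto. unfold Rdiv. rewrite Rmult_assoc, Rinv_l by lra. rewrite Rmult_1_r.
  assert (Rabs (G x - gc) * (G x + gc) = I x).
  { rewrite <- (Rabs_pos_eq (G x + gc)) by lra. rewrite <- Rabs_mult.
    replace ((G x - gc) * (G x + gc)) with (- I x) by nra. rewrite Rabs_Ropp, Rabs_pos_eq; lra. }
  pose proof (Rabs_pos (G x - gc)). nra.
Qed.

Lemma exp_neg_sq_le x : exp (- x ^ 2) <= / (1 + x ^ 2).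
Proof.
  pose proof (exp_ineq1_le (x ^ 2)). pose proof (pow2_ge_0 x).
  replace (exp (- x ^ 2)) with (/ exp (x ^ 2)). apply Rinv_le_contravar. lra. lra.
  rewrite <- exp_Ropp. auto.
Qed.

Lemma G_lim eps : 0 < eps -> exists N, 0 < N /\ forall x, N < x -> Rabs (G x - gc) < eps.
Proof.
  intros He. pose proof gc_pos. exists (/ (eps * gc) + 1). split.
  pose proof (Rinv_0_lt_compat (eps*gc)). assert (0 < eps * gc) by nra. specialize (H0 H1). lra.
  intros x Hx. assert (0 < eps * gc) by nra. pose proof (Rinv_0_lt_compat _ H0).
  eapply Rle_lt_trans. apply G_close. lra.
  pose proof (I_bounds x). pose proof (exp_neg_sq_le x).
  assert (I x < eps * gc).
  { apply Rle_lt_trans with (/ (1 + x ^ 2)). lra.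
    rewrite <- (Rinv_inv (eps * gc)). apply Rinv_lt_contravar. nra. nra. }
  apply Rmult_lt_reg_r with gc. auto. unfold Rdiv. rewrite Rmult_assoc, Rinv_l by lra. lra.
Qed.

Lemma G_odd y : G (- y) = - G y.
Proof.
  unfold G.
  transitivity (RInt gf (-1 * 0 + 0) (-1 * y + 0)). f_equal; ring.
  rewrite <- (@RInt_comp_lin R_CompleteNormedModule) by apply gf_ex.
  transitivity (RInt (fun t => -1 * gf t) 0 y).
  apply RInt_extR. intros t _. unfold gf. change (-1 * exp (- (-1 * t + 0) ^ 2) = -1 * exp (- t ^ 2)).
  f_equal. f_equal. ring.
  rewrite RInt_scalR by apply gf_ex. change (@eq R (-1 * RInt gf 0 y) (- RInt gf 0 y)). ring.
Qed.

Lemma RInt_gf_split A B : RInt gf A B = G B - G A.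
Proof.
  unfold G. rewrite <- (@RInt_Chasles R_CompleteNormedModule gf A 0 B) by apply gf_ex.
  rewrite <- (@opp_RInt_swap R_CompleteNormedModule) by apply gf_ex.
  change (@eq R (- RInt gf 0 A + RInt gf 0 B) (RInt gf 0 B - RInt gf 0 A)). ring.
Qed.

Lemma gauss_imp eps : 0 < eps -> exists N, 0 < N /\ forall A B, A < - N -> N < B ->
  Rabs (RInt gf A B - sqrt PI) < eps.
Proof.
  intros He. destruct (G_lim (eps/2)) as [N [HN HG]]. lra.
  exists N; split; auto. intros A B HA HB.
  rewrite RInt_gf_split. replace A with (- (- A)) by ring. rewrite G_odd.
  pose proof (HG B HB). pose proof (HG (-A) ltac:(lra)).
  replace (sqrt PI) with (gc + gc) by (unfold gc; field).
  replace (G B - - G (- A) - (gc + gc)) with ((G B - gc) + (G (-A) - gc)) by ring.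
  eapply Rle_lt_trans. apply Rabs_triang. lra.
Qed.
Section Mom.
Variables (mu s k : R).
Hypothesis Hs : 0 < s.

Definition r2 := sqrt 2.
Definition sg := s * r2.
Definition mp := mu + k * s ^ 2.
Definition phi t := exp (mp + sg * t).
Definition Ck := exp (k * mu + k ^ 2 * s ^ 2 / 2).
Definition momf x := lnpdf mu s x * exp (k * ln x).

Lemma r2_pos : 0 < r2.
Proof. unfold r2. apply sqrt_lt_R0. lra. Qed.
Lemma r2_sq : r2 * r2 = 2.
Proof. unfold r2. apply sqrt_sqrt. lra. Qed.
Lemma sg_pos : 0 < sg.
Proof. unfold sg. pose proof r2_pos. nra. Qed.
Lemma sPI_pos : 0 < sqrt PI.
Proof. apply sqrt_lt_R0, PI_RGT_0. Qed.

Lemma integrand_id t : (sg * phi t) * momf (phi t) = Ck / sqrt PI * gf t.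
Proof.
  unfold momf, lnpdf, phi. rewrite ln_exp.
  rewrite (Rmult_assoc (/ _) (exp _) (exp _)), <- exp_plus.
  replace (- (mp + sg * t - mu) ^ 2 / (2 * s ^ 2) + k * (mp + sg * t))
    with ((k * mu + k ^ 2 * s ^ 2 / 2) + - t ^ 2).
  rewrite (exp_plus (k * mu + k ^ 2 * s ^ 2 / 2)). unfold Ck, gf.
  rewrite sqrt_mult by (pose proof PI_RGT_0; lra). fold r2.
  pose proof r2_pos. pose proof sPI_pos. pose proof (exp_pos (mp + sg * t)).
  unfold sg in *. field. repeat split; lra.
  unfold mp, sg. pose proof r2_sq.
  replace (mu + k * s ^ 2 + s * r2 * t - mu) with (s * (k * s + r2 * t)) by ring.
  replace (t ^ 2) with (r2 * r2 * t ^ 2 / 2) by (rewrite H; field).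
  field. lra.
Qed.
End Mom.

Definition imp (f : R -> R) (l : R) : Prop :=
  forall eps : R, 0 < eps ->
    exists d M : R, 0 < d /\ d <= M /\
      forall a b : R, 0 < a < d -> M < b -> ex_RInt f a b /\ Rabs (RInt f a b - l) < eps.

Lemma momf_cont mu s k x : 0 < s -> 0 < x -> continuous (momf mu s k) x.
Proof.
  intros Hs Hx. apply contR. unfold momf, lnpdf. pose proof PI_RGT_0.
  assert (0 < sqrt (2 * PI)) by (apply sqrt_lt_R0; lra).
  auto_derive. repeat split; auto. apply Rgt_not_eq. repeat apply Rmult_lt_0_compat; auto.
Qed.

Lemma mom_imp mu s k : 0 < s -> imp (momf mu s k) (Ck mu s k).
Proof.
  intros Hs eps He.
  pose proof (sPI_pos). pose proof (sg_pos s Hs).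
  set (c := Ck mu s k / sqrt PI).
  assert (Hc : 0 < c) by (unfold c, Ck; apply Rdiv_lt_0_compat; auto; apply exp_pos).
  destruct (gauss_imp (eps / c)) as [N [HN HG]]. apply Rdiv_lt_0_compat; auto.
  exists (exp (mp mu s k - sg s * N)), (exp (mp mu s k + sg s * N)).
  split. apply exp_pos. split. apply Rlt_le, exp_increasing. nra.
  intros a b Ha Hb.
  assert (Hb0 : 0 < b). { pose proof (exp_pos (mp mu s k + sg s * N)). lra. }
  assert (Hab : a < b). { assert (exp (mp mu s k - sg s * N) < exp (mp mu s k + sg s * N)) by (apply exp_increasing; nra). lra. }
  split.
  - apply ex_RInt_contR. intros z Hz. rewrite Rmin_left in Hz by lra. apply momf_cont; lra.
  - set (A := (ln a - mp mu s k) / sg s). set (B := (ln b - mp mu s k) / sg s).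
    assert (EA : phi mu s k A = a). { unfold phi, A. replace (mp mu s k + sg s * ((ln a - mp mu s k) / sg s)) with (ln a) by (field; lra). apply exp_ln; lra. }
    assert (EB : phi mu s k B = b). { unfold phi, B. replace (mp mu s k + sg s * ((ln b - mp mu s k) / sg s)) with (ln b) by (field; lra). apply exp_ln; lra. }
    assert (HA : A < - N).
    { unfold A. assert (ln a < mp mu s k - sg s * N).
      { rewrite <- (ln_exp (mp mu s k - sg s * N)). apply ln_increasing; lra. }
      apply Rmult_lt_reg_r with (sg s). auto. unfold Rdiv. rewrite Rmult_assoc, Rinv_l by lra. lra. }
    assert (HB : N < B).
    { unfold B. assert (mp mu s k + sg s * N < ln b).
      { rewrite <- (ln_exp (mp mu s k + sg s * N)). apply ln_increasing. apply exp_pos. lra. }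
      apply Rmult_lt_reg_r with (sg s). auto. unfold Rdiv. rewrite Rmult_assoc, Rinv_l by lra. lra. }
    rewrite <- EA, <- EB.
    rewrite <- (@RInt_comp R_CompleteNormedModule _ (phi mu s k) (fun t => sg s * phi mu s k t)).
    + erewrite RInt_extR with (g := fun t => c * gf t).
      2: { intros t _. unfold c. rewrite <- integrand_id by auto. reflexivity. }
      * rewrite RInt_scalR by apply gf_ex.
        replace (c * RInt gf A B - Ck mu s k) with (c * (RInt gf A B - sqrt PI)) by (unfold c; field; lra).
        rewrite Rabs_mult, Rabs_pos_eq by lra.
        specialize (HG A B HA HB).
        apply Rmult_lt_reg_l with (/ c). apply Rinv_0_lt_compat; auto.
        rewrite <- Rmult_assoc, Rinv_l, Rmult_1_l by lra. rewrite Rmult_comm. exact HG.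
    + intros x _. apply momf_cont. auto. apply exp_pos.
    + intros x _. split.
      * unfold phi. auto_derive. auto. ring.
      * apply contR. unfold phi. auto_derive. auto.
Qed.

Lemma imp_ext f g l : (forall x, 0 < x -> f x = g x) -> imp f l -> imp g l.
Proof.
  intros E H eps He. destruct (H eps He) as [d [M [Hd [HdM HH]]]].
  exists d, M. split; [auto|split; [auto|]]. intros a b Ha Hb. destruct (HH a b Ha Hb) as [H1 H2].
  assert (Hab : a < b) by lra.
  assert (E' : forall x, Rmin a b < x < Rmax a b -> f x = g x).
  { intros x Hx. rewrite Rmin_left in Hx by lra. apply E; lra. }
  split. apply (@ex_RInt_ext R_NormedModule) with f; auto.
  rewrite <- (RInt_extR f g a b E'). auto.
Qed.

Lemma imp_plus f g l1 l2 : imp f l1 -> imp g l2 -> imp (fun x => f x + g x) (l1 + l2).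
Proof.
  intros H1 H2 eps He.
  destruct (H1 (eps/2)) as [d1 [M1 [Hd1 [HdM1 HH1]]]]. lra.
  destruct (H2 (eps/2)) as [d2 [M2 [Hd2 [HdM2 HH2]]]]. lra.
  exists (Rmin d1 d2), (Rmax M1 M2). split. apply Rmin_glb_lt; auto. split.
  apply Rle_trans with d1. apply Rmin_l. apply Rle_trans with M1; auto. apply Rmax_l.
  intros a b Ha Hb.
  assert (Ha1 : 0 < a < d1) by (pose proof (Rmin_l d1 d2); lra).
  assert (Ha2 : 0 < a < d2) by (pose proof (Rmin_r d1 d2); lra).
  assert (Hb1 : M1 < b) by (pose proof (Rmax_l M1 M2); lra).
  assert (Hb2 : M2 < b) by (pose proof (Rmax_r M1 M2); lra).
  destruct (HH1 a b Ha1 Hb1) as [E1 B1]. destruct (HH2 a b Ha2 Hb2) as [E2 B2].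
  split. apply (@ex_RInt_plus R_NormedModule); auto.
  replace (RInt (fun x => f x + g x) a b) with (RInt f a b + RInt g a b).
  2: { symmetry; exact (@RInt_plus R_CompleteNormedModule f g a b E1 E2). }
  replace (RInt f a b + RInt g a b - (l1 + l2)) with ((RInt f a b - l1) + (RInt g a b - l2)) by ring.
  eapply Rle_lt_trans. apply Rabs_triang. lra.
Qed.

Lemma imp_scal f c l : imp f l -> imp (fun x => c * f x) (c * l).
Proof.
  intros H eps He.
  destruct (H (eps / (Rabs c + 1))) as [d [M [Hd [HdM HH]]]].
  apply Rdiv_lt_0_compat; auto. pose proof (Rabs_pos c); lra.
  exists d, M. split; [auto|split; [auto|]]. intros a b Ha Hb. destruct (HH a b Ha Hb) as [E B].
  split. apply (@ex_RInt_scal R_NormedModule); auto.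
  rewrite RInt_scalR by auto.
  replace (c * RInt f a b - c * l) with (c * (RInt f a b - l)) by ring.
  rewrite Rabs_mult. pose proof (Rabs_pos c). pose proof (Rabs_pos (RInt f a b - l)).
  apply Rle_lt_trans with ((Rabs c + 1) * Rabs (RInt f a b - l)). nra.
  apply Rmult_lt_reg_l with (/ (Rabs c + 1)). apply Rinv_0_lt_compat; lra.
  rewrite <- Rmult_assoc, Rinv_l, Rmult_1_l by lra. rewrite Rmult_comm. exact B.
Qed.

Lemma imp_improper f l : imp f l -> improper_int0inf f l.
Proof.
  intros H eps He. destruct (H eps He) as [d [M [Hd [HdM HH]]]].
  exists d, M. split; [auto|split; [auto|]]. intros a b Ha Hb. destruct (HH a b Ha Hb) as [E B].
  exists (ex_RInt_Reals_0 f a b E). rewrite <- RInt_Reals. exact B.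
Qed.

Definition al mu s := Ck mu s 1.
Definition be mu s := Ck mu s (-1).

Lemma imp_comb mu s c0 c1 c2 : 0 < s ->
  imp (fun x => lnpdf mu s x * (c0 + c1 * x + c2 * / x)) (c0 + c1 * al mu s + c2 * be mu s).
Proof.
  intros Hs.
  pose proof (mom_imp mu s 0 Hs) as M0.
  pose proof (mom_imp mu s 1 Hs) as M1.
  pose proof (mom_imp mu s (-1) Hs) as M2.
  assert (E0 : Ck mu s 0 = 1) by (unfold Ck; replace (0 * mu + 0 ^ 2 * s ^ 2 / 2) with 0 by field; apply exp_0).
  rewrite E0 in M0.
  apply (imp_scal _ c0) in M0. apply (imp_scal _ c1) in M1. apply (imp_scal _ c2) in M2.
  pose proof (imp_plus _ _ _ _ (imp_plus _ _ _ _ M0 M1) M2) as M.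
  rewrite Rmult_1_r in M. unfold al, be.
  apply imp_ext with (2 := M). intros x Hx. unfold momf.
  replace (1 * ln x) with (ln x) by ring. rewrite exp_ln by auto.
  replace (-1 * ln x) with (- ln x) by ring. rewrite exp_Ropp, exp_ln by auto.
  replace (0 * ln x) with 0 by ring. rewrite exp_0. ring.
Qed.

Lemma al_be mu s : al mu s * be mu s = exp (s ^ 2).
Proof. unfold al, be, Ck. rewrite <- exp_plus. f_equal. field. Qed.

Definition S1 (xs : list R) := fold_right Rplus 0 xs.
Definition S2 (xs : list R) := fold_right (fun x acc => / x + acc) 0 xs.

Definition V mu s (m : nat) a b :=
  a * b + a * INR m * be mu s + b * INR m * al mu s + INR m + INR m * (INR m - 1) * al mu s * be mu s.

Lemma main_ind mu s : 0 < s -> forall m c d a b (F : list R -> R),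
  (forall ys, List.length ys = m -> List.Forall (fun y => 0 < y) ys ->
     F ys = c * ((a + S1 ys) * (b + S2 ys)) + d) ->
  ln_expect mu s m F (c * V mu s m a b + d).
Proof.
  intros Hs m. induction m as [|m IH]; intros c d a b F HF.
  - simpl. rewrite HF by auto. unfold V, S1, S2. simpl. ring.
  - exists (fun x => c * V mu s m (a + x) (b + / x) + d). split.
    + intros x Hx. apply IH. intros ys Hl Hp. rewrite HF.
      unfold S1, S2; simpl. fold (S1 ys) (S2 ys). ring.
      simpl; auto. constructor; auto.
    + apply imp_improper.
      set (al0 := al mu s). set (be0 := be mu s).
      apply imp_ext with (f := fun x => lnpdf mu s x *
        ((c * (a * b + 1 + a * INR m * be0 + b * INR m * al0 + INR m + INR m * (INR m - 1) * al0 * be0) + d)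
         + (c * (b + INR m * be0)) * x + (c * (a + INR m * al0)) * / x)).
      { intros x Hx. f_equal. unfold V. fold al0 be0. field. lra. }
      replace (c * V mu s (S m) a b + d) with
        ((c * (a * b + 1 + a * INR m * be0 + b * INR m * al0 + INR m + INR m * (INR m - 1) * al0 * be0) + d)
         + (c * (b + INR m * be0)) * al0 + (c * (a + INR m * al0)) * be0).
      apply imp_comb; auto.
      unfold V. fold al0 be0. rewrite S_INR. ring.
Qed.

Theorem proposition1 (mu_Y sigma_Y : R) (n : nat) :
  0 < sigma_Y -> (2 <= n)%nat ->
  ln_expect mu_Y sigma_Y n (sample_K n)
    ((INR n - 1) / INR n * (exp (sigma_Y ^ 2) - 1)).
Proof.
  intros Hs Hn.
  assert (Hn0 : 0 < INR n) by (apply lt_0_INR; lia).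
  replace ((INR n - 1) / INR n * (exp (sigma_Y ^ 2) - 1)) with
    (/ (INR n * INR n) * V mu_Y sigma_Y n 0 0 + -1).
  2: { unfold V. rewrite Rmult_assoc with (r1 := INR n * (INR n - 1)), al_be. field. lra. }
  apply main_ind; auto.
  intros ys Hl Hp.
  assert (Hpos : 0 < S2 ys).
  { destruct ys as [|y ys]. simpl in Hl; lia.
    clear Hl. revert y Hp. induction ys as [|z zs IHz]; intros y Hp; inversion Hp; subst.
    simpl. rewrite Rplus_0_r. apply Rinv_0_lt_compat; auto.
    specialize (IHz z H2). unfold S2 in *. simpl in *.
    pose proof (Rinv_0_lt_compat y H1). lra. }
  unfold sample_K, sample_A, sample_H. fold (S1 ys) (S2 ys).
  field. lra.
Qed.
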